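(* For every $r\ge0$, $\gamma(h_r)=(-1)^{\binom r2}h_r^*$ and $\gamma(e_r)=(-1)^{\binom r2}e_r^*$ in $OSym$. Consequently $*\circ\gamma\circ\psi=\psi\circ*\circ\gamma$.
   Context: $\Bbbk$ is a field of characteristic $\neq2$. $OSym$ is the graded superalgebra generated by $h_r$ ($r\ge1$) of degree $2r$, parity $r\bmod 2$, subject to (with $h_0:=1$, $r\ge0,s\ge1$): $h_rh_s=h_sh_r$ if $r\equiv s\pmod2$; $h_rh_s+(-1)^rh_sh_r=(-1)^rh_{r+1}h_{s-1}+h_{s-1}h_{r+1}$ otherwise. Define $e_r$ by $\sum_{s=0}^r(-1)^se_sh_{r-s}=\delta_{r,0}$; the $e_r$ ($r\ge1$) generate $OSym$ subject to the same relations as the $h_r$. $\psi$ is the algebra automorphism of $OSym$ with $\psi(h_r)=(-1)^re_r$; $\gamma$ is the algebra involution with $\gamma(e_r)=(-1)^{\binom r2}e_r$; $*$ is the superalgebra anti-involution (i.e. $(ab)^*=(-1)^{\mathrm{par}(a)\mathrm{par}(b)}b^*a^*$) with $e_r^*=e_r$. *)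

(* Defs.v *)
(* OSym is presented by generators and relations:
   syntactic terms of the free unital associative k-algebra on generators
   h_1, h_2, ... modulo the smallest congruence [oeq] containing the
   k-algebra axioms and the defining relations of OSym. *)
From mathcomp Require Import all_boot all_order all_algebra.
Set Implicit Arguments. Unset Strict Implicit. Unset Printing Implicit Defensive.
Import GRing.Theory.
Local Open Scope ring_scope.

Section OSym.
Variable k : fieldType.

(* [G n] is the generator h_(n+1). *)
Inductive term : Type :=
| T0 | T1 | G of nat
| Tadd of term & term
| Tmul of term & term
| Tscale of k & term.

Definition hh (r : nat) : term := if r is n.+1 then G n else T1.

Definition sgn (n : nat) : k := (-1) ^+ n.

Inductive oeq : term -> term -> Prop :=
| oeq_refl x : oeq x x
| oeq_sym x y : oeq x y -> oeq y x
| oeq_trans x y z : oeq x y -> oeq y z -> oeq x z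
| oeq_add x x' y y' : oeq x x' -> oeq y y' -> oeq (Tadd x y) (Tadd x' y')
| oeq_mul x x' y y' : oeq x x' -> oeq y y' -> oeq (Tmul x y) (Tmul x' y')
| oeq_scale a x x' : oeq x x' -> oeq (Tscale a x) (Tscale a x')
| oeq_addA x y z : oeq (Tadd x (Tadd y z)) (Tadd (Tadd x y) z)
| oeq_addC x y : oeq (Tadd x y) (Tadd y x)
| oeq_add0 x : oeq (Tadd T0 x) x
| oeq_addN x : oeq (Tadd x (Tscale (-1) x)) T0
| oeq_mulA x y z : oeq (Tmul x (Tmul y z)) (Tmul (Tmul x y) z)
| oeq_mul1l x : oeq (Tmul T1 x) x
| oeq_mul1r x : oeq (Tmul x T1) x
| oeq_mulDl x y z : oeq (Tmul (Tadd x y) z) (Tadd (Tmul x z) (Tmul y z))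
| oeq_mulDr x y z : oeq (Tmul x (Tadd y z)) (Tadd (Tmul x y) (Tmul x z))
| oeq_scaleDr a x y : oeq (Tscale a (Tadd x y)) (Tadd (Tscale a x) (Tscale a y))
| oeq_scaleDl a b x : oeq (Tscale (a + b) x) (Tadd (Tscale a x) (Tscale b x))
| oeq_scaleA a b x : oeq (Tscale (a * b) x) (Tscale a (Tscale b x))
| oeq_scale1 x : oeq (Tscale 1 x) x
| oeq_scaleAl a x y : oeq (Tscale a (Tmul x y)) (Tmul (Tscale a x) y)
| oeq_scaleAr a x y : oeq (Tscale a (Tmul x y)) (Tmul x (Tscale a y))
| oeq_rel_even r s : (0 < s)%N -> odd r = odd s ->
    oeq (Tmul (hh r) (hh s)) (Tmul (hh s) (hh r))
| oeq_rel_odd r s : (0 < s)%N -> odd r <> odd s ->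
    oeq (Tadd (Tmul (hh r) (hh s)) (Tscale (sgn r) (Tmul (hh s) (hh r))))
        (Tadd (Tscale (sgn r) (Tmul (hh r.+1) (hh s.-1)))
              (Tmul (hh s.-1) (hh r.+1))).

(* parity (Z/2-grading): par x b means x is homogeneous of parity b *)
Inductive par : term -> bool -> Prop :=
| par0 b : par T0 b
| par1 : par T1 false
| parG n : par (G n) (odd n.+1)
| parD x y b : par x b -> par y b -> par (Tadd x y) b
| parZ a x b : par x b -> par (Tscale a x) b
| parM x y b c : par x b -> par y c -> par (Tmul x y) (b (+) c)
| par_oeq x y b : par x b -> oeq x y -> par y b.

Definition tsum (s : seq term) : term := foldr Tadd T0 s.

(* e_0 .. e_r, from  sum_(s=0)^r (-1)^s e_s h_(r-s) = delta_(r,0) *)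
Fixpoint es (r : nat) : seq term :=
  match r with
  | 0 => [:: T1]
  | r'.+1 =>
      let l := es r' in
      rcons l (Tscale (sgn r')
        (tsum [seq Tscale (sgn i) (Tmul (nth T0 l i) (hh (r'.+1 - i)))
              | i <- iota 0 r'.+1]))
  end.

Definition ee (r : nat) : term := nth T0 (es r) r.

Definition respects (f : term -> term) :=
  forall x y, oeq x y -> oeq (f x) (f y).

Definition linear_map (f : term -> term) :=
  respects f /\ (forall x y, oeq (f (Tadd x y)) (Tadd (f x) (f y)))
  /\ (forall a x, oeq (f (Tscale a x)) (Tscale a (f x))).

Definition alg_map (f : term -> term) :=
  linear_map f /\ oeq (f T1) T1
  /\ (forall x y, oeq (f (Tmul x y)) (Tmul (f x) (f y))).

Definition alg_automorphism (f : term -> term) :=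
  alg_map f /\ exists g, alg_map g /\
    (forall x, oeq (g (f x)) x) /\ (forall x, oeq (f (g x)) x).

Definition alg_involution (f : term -> term) :=
  alg_map f /\ (forall x, oeq (f (f x)) x).

Definition super_anti_involution (f : term -> term) :=
  linear_map f
  /\ (forall x b, par x b -> par (f x) b)
  /\ (forall x, oeq (f (f x)) x)
  /\ (forall x y b c, par x b -> par y c ->
        oeq (f (Tmul x y)) (Tscale (sgn (b && c)) (Tmul (f y) (f x)))).

End OSym.

(* Main.v *)
From HB Require Import structures.
Require Import Defs.
From mathcomp Require Import all_boot all_order all_algebra.
From mathcomp Require Import boolp zify.
Import GRing.Theory.
Local Open Scope ring_scope.

Module Helpers.
Set Implicit Arguments. Unset Strict Implicit. Unset Printing Implicit Defensive.

Definition Qt (k : fieldType) := {P : term k -> Prop | exists t, P = oeq t}.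
HB.instance Definition _ (k : fieldType) := gen_eqMixin (Qt k).
HB.instance Definition _ (k : fieldType) := gen_choiceMixin (Qt k).

Section Q.
Variable k : fieldType.
Local Notation term := (term k).
Local Notation oeq := (@oeq k).
Local Notation Q := (Qt k).

Definition cls (t : term) : Q := exist _ (oeq t) (ex_intro _ t erefl).

Lemma sig_eq (a b : Q) : proj1_sig a = proj1_sig b -> a = b.
Proof. case: a => a pa; case: b => b pb /= eab; subst b; congr exist; exact: Prop_irrelevance. Qed.

Lemma cls_eq x y : cls x = cls y <-> oeq x y.
Proof.
split.
  move=> /(congr1 (@proj1_sig _ _)) /= e.
  have H : (oeq y) x by rewrite -e; exact: oeq_refl.
  exact: oeq_sym H.
move=> h; apply: sig_eq => /=; apply: funext => z; apply: propext; split => H.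
  exact: oeq_trans (oeq_sym h) H.
exact: oeq_trans h H.
Qed.

Definition rep (q : Q) : term := proj1_sig (cid (proj2_sig q)).
Lemma repK q : cls (rep q) = q.
Proof.
apply: sig_eq => /=; rewrite /rep; case: (cid _) => t /= ->; by [].
Qed.
Lemma clsP q : exists t, q = cls t.
Proof. by exists (rep q); rewrite repK. Qed.
Lemma rep_oeq x : oeq (rep (cls x)) x.
Proof. by apply/cls_eq; rewrite repK. Qed.

Fact qadd_key : unit. Proof. exact: tt. Qed.
Definition qadd := locked_with qadd_key (fun a b => cls (Tadd (rep a) (rep b))).
Fact qmul_key : unit. Proof. exact: tt. Qed.
Definition qmul := locked_with qmul_key (fun a b => cls (Tmul (rep a) (rep b))).
Fact qscale_key : unit. Proof. exact: tt. Qed.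
Definition qscale := locked_with qscale_key (fun c a => cls (Tscale c (rep a))).
Definition qopp a := qscale (-1) a.
Definition q0 := cls (T0 k).
Definition q1 := cls (T1 k).

Lemma qaddE x y : qadd (cls x) (cls y) = cls (Tadd x y).
Proof. by rewrite [qadd]unlock; apply/cls_eq; apply: oeq_add; apply: rep_oeq. Qed.
Lemma qmulE x y : qmul (cls x) (cls y) = cls (Tmul x y).
Proof. by rewrite [qmul]unlock; apply/cls_eq; apply: oeq_mul; apply: rep_oeq. Qed.
Lemma qscaleE c x : qscale c (cls x) = cls (Tscale c x).
Proof. by rewrite [qscale]unlock; apply/cls_eq; apply: oeq_scale; apply: rep_oeq. Qed.

Ltac qel a := let x := fresh "x" in case: (clsP a) => x ->.

Lemma qaddA : associative qadd.
Proof. move=> a b c; qel a; qel b; qel c; rewrite !qaddE; apply/cls_eq; exact: oeq_addA. Qed.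
Lemma qaddC : commutative qadd.
Proof. move=> a b; qel a; qel b; rewrite !qaddE; apply/cls_eq; exact: oeq_addC. Qed.
Lemma qadd0 : left_id q0 qadd.
Proof. move=> a; qel a; rewrite !qaddE; apply/cls_eq; exact: oeq_add0. Qed.
Lemma qaddN : left_inverse q0 qopp qadd.
Proof. move=> a; qel a; rewrite /qopp qscaleE qaddE; apply/cls_eq.
apply: oeq_trans (oeq_addC _ _) _; exact: oeq_addN. Qed.

HB.instance Definition _ := GRing.isZmodule.Build Q qaddA qaddC qadd0 qaddN.

Lemma qmulA : associative qmul.
Proof. move=> a b c; qel a; qel b; qel c; rewrite !qmulE; apply/cls_eq; exact: oeq_mulA. Qed.
Lemma qmul1l : left_id q1 qmul.
Proof. move=> a; qel a; rewrite !qmulE; apply/cls_eq; exact: oeq_mul1l. Qed.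
Lemma qmul1r : right_id q1 qmul.
Proof. move=> a; qel a; rewrite !qmulE; apply/cls_eq; exact: oeq_mul1r. Qed.
Lemma qmulDl : left_distributive qmul +%R.
Proof. move=> a b c; change (qmul (qadd a b) c = qadd (qmul a c) (qmul b c)).
qel a; qel b; qel c; rewrite !qaddE !qmulE qaddE; apply/cls_eq; exact: oeq_mulDl. Qed.
Lemma qmulDr : right_distributive qmul +%R.
Proof. move=> a b c; change (qmul a (qadd b c) = qadd (qmul a b) (qmul a c)).
qel a; qel b; qel c; rewrite !qaddE !qmulE qaddE; apply/cls_eq; exact: oeq_mulDr. Qed.

HB.instance Definition _ := GRing.Zmodule_isPzRing.Build Q qmulA qmul1l qmul1r qmulDl qmulDr.

Lemma clsD x y : cls (Tadd x y) = cls x + cls y.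
Proof. by rewrite -qaddE. Qed.
Lemma clsM x y : cls (Tmul x y) = cls x * cls y.
Proof. by rewrite -qmulE. Qed.
Lemma cls0 : cls (T0 k) = 0. Proof. by []. Qed.
Lemma cls1 : cls (T1 k) = 1. Proof. by []. Qed.
End Q.

Section Conv.
Variable R : pzRingType.
Definition conv (f g : nat -> R) n := \sum_(i < n.+1) f i * g (n - i)%N.

Lemma conv_rev (f g : nat -> R) n : \sum_(i < n.+1) f (n - i)%N * g i = conv f g n.
Proof.
rewrite /conv (reindex_inj rev_ord_inj); apply: eq_bigr => i _ /=.
by rewrite subSS subKn // -ltnS.
Qed.

Lemma inner_shift (G : nat -> R) n j : (j <= n)%N ->
  \sum_(i < n.+1 | (j <= i)%N) G i = \sum_(l < (n - j).+1) G (l + j)%N.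
Proof.
move=> jn.
rewrite -(big_mkord (fun i => (j <= i)%N)) (@big_cat_nat _ _ _ j) /= ?leq0n //; last by rewrite ltnW.
rewrite big1_seq ?add0r; last first.
  by move=> i /andP[ji]; rewrite mem_index_iota => /andP[_ ij]; rewrite leqNgt ij in ji.
rewrite (@big_addn _ _ _ 0 n.+1 j) subSn // big_mkord.
by apply: eq_bigl => i; rewrite leq_addl.
Qed.

Lemma convA (f g h : nat -> R) n : conv (conv f g) h n = conv f (conv g h) n.
Proof.
rewrite /conv.
transitivity (\sum_(i < n.+1) \sum_(j < n.+1 | (j < i.+1)%N) f j * g (i - j)%N * h (n - i)%N).
  apply: eq_bigr => i _; rewrite big_distrl /=.
  by rewrite (big_ord_widen n.+1 (fun j => f j * g (i - j)%N * h (n - i)%N)) //.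
rewrite (exchange_big_dep xpredT) //=; apply: eq_bigr => j _.
rewrite big_distrr /=.
under eq_bigl do rewrite ltnS.
rewrite (inner_shift (fun i => f j * g (i - j)%N * h (n - i)%N)); last by rewrite -ltnS.
apply: eq_bigr => l _.
by rewrite addnK mulrA -subnDA addnC.
Qed.

Lemma inv_unique (a g h : nat -> R) :
  (forall n, conv a g n = (n == 0)%:R) ->
  (forall n, \sum_(i < n.+1) h (n - i)%N * a i = (n == 0)%:R) ->
  forall n, g n = h n.
Proof.
move=> Hag Hha n.
have Hha' : forall m, conv h a m = (m == 0)%:R by move=> m; rewrite -conv_rev Hha.
have e1 : conv (conv h a) g n = g n.
  rewrite {1}/conv big_ord_recl Hha' mul1r subn0 big1 ?addr0 // => i _.
  by rewrite Hha' /= mul0r.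
have e2 : conv h (conv a g) n = h n.
  rewrite {1}/conv big_ord_recr /= subnn Hag /= mulr1 big1 ?add0r // => i _.
  by rewrite Hag subn_eq0 leqNgt ltn_ord /= mulr0.
by rewrite -e1 convA e2.
Qed.
End Conv.

Section Main.
Variable k : fieldType.
Local Notation term := (term k).
Local Notation oeq := (@oeq k).
Local Notation Q := (Qt k).
Local Notation cls := (@cls k).

Lemma clsS n x : cls (Tscale (sgn k n) x) = (-1)^+n * cls x.
Proof.
elim: n => [|n IH].
  rewrite expr0 mul1r; apply/cls_eq; rewrite /sgn expr0; exact: oeq_scale1.
have -> : cls (Tscale (sgn k n.+1) x) = - cls (Tscale (sgn k n) x).
  rewrite -[- _]/(qscale (-1) _) qscaleE; apply/cls_eq.
  by rewrite /sgn exprS; apply: oeq_scaleA.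
by rewrite IH exprS mulN1r mulNr.
Qed.

Lemma cls_tsum (l : seq term) : cls (tsum l) = \sum_(t <- l) cls t.
Proof. elim: l => [|t l IH]; first by rewrite big_nil. by rewrite big_cons /= clsD IH. Qed.

Lemma size_es r : size (es k r) = r.+1.
Proof. by elim: r => [|r IH] //=; rewrite size_rcons IH. Qed.

Lemma nth_es r i : (i <= r)%N -> nth (T0 k) (es k r) i = ee k i.
Proof.
elim: r => [|r IH]; first by rewrite leqn0 => /eqP ->.
rewrite leq_eqVlt => /orP[/eqP -> //|]; rewrite ltnS => ir.
by rewrite /= nth_rcons size_es ltnS ir IH.
Qed.

Lemma ee_succ r : ee k r.+1 = Tscale (sgn k r)
  (tsum [seq Tscale (sgn k i) (Tmul (ee k i) (hh k (r.+1 - i))) | i <- iota 0 r.+1]).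
Proof.
have es_succ : es k r.+1 = rcons (es k r) (Tscale (sgn k r)
   (tsum [seq Tscale (sgn k i) (Tmul (nth (T0 k) (es k r) i) (hh k (r.+1 - i))) | i <- iota 0 r.+1])) by [].
rewrite /ee es_succ nth_rcons size_es ltnn eqxx; congr (Tscale _ (tsum _)).
apply/eq_in_map => i; rewrite mem_iota add0n ltnS => /andP[_ ir].
by rewrite nth_es.
Qed.

Definition E s := cls (ee k s).
Definition Hh r := cls (hh k r).

Lemma E0 : E 0 = 1. Proof. by []. Qed.
Lemma Hh0 : Hh 0 = 1. Proof. by []. Qed.

Lemma E_succ r : E r.+1 = (-1)^+r * \sum_(i < r.+1) (-1)^+i * (E i * Hh (r.+1 - i)).
Proof.
rewrite /E ee_succ clsS cls_tsum big_map; congr (_ * _).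
rewrite -(subn0 r.+1) -/(index_iota 0 r.+1) big_mkord subn0.
by apply: eq_bigr => i _; rewrite clsS clsM.
Qed.

Lemma Rdef r : \sum_(s < r.+1) (-1)^+s * (E s * Hh (r - s)) = (r == 0)%:R.
Proof.
case: r => [|r]; first by rewrite big_ord1 /= E0 Hh0 !mul1r.
rewrite big_ord_recr /= subnn Hh0 mulr1 E_succ mulrA -exprD.
have -> : (-1)^+(r.+1 + r) = -1 :> Q by rewrite -signr_odd addSn /= oddD addbb.
by rewrite mulN1r subrr.
Qed.

Lemma par_hh r : par (hh k r) (odd r).
Proof. case: r => [|r] /=; [exact: par1 | exact: parG]. Qed.

Lemma par_tsum (I : eqType) (f : I -> term) (l : seq I) b :
  (forall t, t \in l -> par (f t) b) -> par (tsum (map f l)) b.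
Proof.
elim: l => [|t l IH] H /=; first exact: par0.
apply: parD; first by apply: H; rewrite inE eqxx.
by apply: IH => u ul; apply: H; rewrite inE ul orbT.
Qed.

Lemma par_ee r : par (ee k r) (odd r).
Proof.
elim/ltn_ind: r => -[|r] IH; first exact: par1.
rewrite ee_succ; apply: parZ; apply: par_tsum => i.
rewrite mem_iota add0n ltnS => /andP[_ ir]; apply: parZ.
have -> : odd r.+1 = odd i (+) odd (r.+1 - i) by rewrite oddB ?(leqW ir) // addbCA addbb addbF.
by apply: parM; [apply: IH; rewrite ltnS | exact: par_hh].
Qed.


Definition liftQ (f : term -> term) (q : Q) : Q := cls (f (rep q)).
Lemma liftQE f : respects f -> forall x, liftQ f (cls x) = cls (f x).
Proof. move=> Rf x; apply/cls_eq; apply: Rf; exact: rep_oeq. Qed.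

Section Lin.
Variable f : term -> term.
Hypothesis Lf : linear_map f.
Let Rf : respects f := proj1 Lf.

Lemma liftQD : {morph liftQ f : a b / a + b}.
Proof.
move=> a b; case: (clsP a) => x ->; case: (clsP b) => y ->.
rewrite -clsD !liftQE // -clsD; apply/cls_eq; exact: (proj1 (proj2 Lf)).
Qed.

Lemma liftQ0 : liftQ f 0 = 0.
Proof.
have e : liftQ f 0 = liftQ f 0 + liftQ f 0 by rewrite -liftQD addr0.
have := congr1 (fun v => v - liftQ f 0) e; rewrite addrK subrr => h; by rewrite -h.
Qed.

Lemma liftQsum (I : Type) (r : seq I) (P : pred I) (F : I -> Q) :
  liftQ f (\sum_(i <- r | P i) F i) = \sum_(i <- r | P i) liftQ f (F i).
Proof. exact: (big_morph _ liftQD liftQ0). Qed.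

Lemma liftQS n q : liftQ f ((-1)^+n * q) = (-1)^+n * liftQ f q.
Proof.
case: (clsP q) => x ->; rewrite -clsS !liftQE // -clsS; apply/cls_eq.
exact: (proj2 (proj2 Lf)).
Qed.

Lemma liftQZ a q : liftQ f (qscale a q) = qscale a (liftQ f q).
Proof.
case: (clsP q) => x ->; rewrite qscaleE !liftQE // qscaleE; apply/cls_eq.
exact: (proj2 (proj2 Lf)).
Qed.
End Lin.

Section Alg.
Variable f : term -> term.
Hypothesis Af : alg_map f.
Let Rf : respects f := proj1 (proj1 Af).

Lemma liftQM : {morph liftQ f : a b / a * b}.
Proof.
move=> a b; case: (clsP a) => x ->; case: (clsP b) => y ->.
rewrite -clsM !liftQE // -clsM; apply/cls_eq; exact: (proj2 (proj2 Af)).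
Qed.

Lemma liftQ1 : liftQ f 1 = 1.
Proof. rewrite -[1]/(cls (T1 k)) liftQE //; apply/cls_eq; exact: (proj1 (proj2 Af)). Qed.
End Alg.

Definition parQ (q : Q) b := exists x, q = cls x /\ par x b.

Lemma parQ_cls x b : par x b -> parQ (cls x) b.
Proof. by move=> p; exists x. Qed.

Section Star.
Variable star : term -> term.
Hypothesis Hs : super_anti_involution star.
Let Ls : linear_map star := proj1 Hs.
Let Rs : respects star := proj1 Ls.

Lemma sQM q1 q2 b c : parQ q1 b -> parQ q2 c ->
  liftQ star (q1 * q2) = (-1)^+(b && c) * (liftQ star q2 * liftQ star q1).
Proof.
move=> [x [-> px]] [y [-> py]].
rewrite -clsM !liftQE //.
move/cls_eq: (proj2 (proj2 (proj2 Hs)) x y b c px py) => ->.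
by rewrite clsS clsM.
Qed.

Lemma sQK q : liftQ star (liftQ star q) = q.
Proof.
case: (clsP q) => x ->; rewrite !liftQE //; apply/cls_eq.
exact: (proj1 (proj2 (proj2 Hs))).
Qed.

Lemma sQ1 : liftQ star 1 = 1.
Proof.
have p : parQ (liftQ star 1) false.
  exists (star (T1 k)); split; first by rewrite -[1]/(cls (T1 k)) liftQE.
  apply: (proj1 (proj2 Hs)); exact: par1.
have p1 : parQ 1 false by exists (T1 k); split => //; exact: par1.
have := sQM p p1; rewrite /= !mulr1 sQK expr0 mul1r mulr1 => h; exact: esym h.
Qed.

Lemma parQ_star q b : parQ q b -> parQ (liftQ star q) b.
Proof.
move=> [x [-> px]]; exists (star x); split; first by rewrite liftQE.
exact: (proj1 (proj2 Hs)).
Qed.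
End Star.

Lemma bin2D s m : 'C(s + m, 2) = ('C(s, 2) + 'C(m, 2) + s * m)%N.
Proof.
elim: m => [|m IH]; first by rewrite addn0 bin0n muln0 !addn0.
rewrite addnS binS IH bin1 binS bin1 mulnS; lia.
Qed.

Lemma signs_eq i m (X : Q) :
  (-1)^+'C(m,2) * ((-1)^+(i + 'C(i,2)) * X) =
  (-1)^+'C(i + m, 2) * ((-1)^+i * ((-1)^+(odd i && odd m) * X)).
Proof.
rewrite !mulrA -!exprD; congr (_ * _).
rewrite -signr_odd -[RHS]signr_odd; congr (_ ^+ _).
rewrite bin2D !oddD oddM.
by case: (odd 'C(i, 2)); case: (odd 'C(m, 2)); case: (odd i); case: (odd m).
Qed.

End Main.

Section Part1.
Variable k : fieldType.
Variables gam star : term k -> term k.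
Hypothesis Agam : alg_map gam.
Hypothesis Hgame : forall r, oeq (gam (ee k r)) (Tscale (sgn k 'C(r, 2)) (ee k r)).
Hypothesis Hstar : super_anti_involution star.
Hypothesis Hstare : forall r, oeq (star (ee k r)) (ee k r).

Let Lgam := proj1 Agam.
Let Rgam := proj1 Lgam.
Let Lstar := proj1 Hstar.
Let Rstar := proj1 Lstar.
Local Notation gQ := (liftQ gam).
Local Notation sQ := (liftQ star).

Lemma gQ_E s : gQ (E k s) = (-1)^+'C(s,2) * E k s.
Proof. by rewrite /E liftQE // -clsS; apply/cls_eq. Qed.

Lemma sQ_E s : sQ (E k s) = E k s.
Proof. by rewrite /E liftQE //; apply/cls_eq. Qed.

Lemma delta_g (n : nat) : gQ ((n == 0)%:R : Qt k) = (n == 0)%:R.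
Proof. case: n => [|n] /=; [rewrite mulr1n; exact: (liftQ1 Agam) | rewrite mulr0n; exact: (liftQ0 Lgam)]. Qed.

Lemma delta_s (n : nat) : sQ ((n == 0)%:R : Qt k) = (n == 0)%:R.
Proof. case: n => [|n] /=; [rewrite mulr1n; exact: (sQ1 Hstar) | rewrite mulr0n; exact: (liftQ0 Lstar)]. Qed.

Lemma comm_sign m (x y : Qt k) : x * ((-1)^+m * y) = (-1)^+m * (x * y).
Proof. by rewrite mulrA (commr_sign x m) -mulrA. Qed.

Lemma part1 r : oeq (gam (hh k r)) (Tscale (sgn k 'C(r, 2)) (star (hh k r))).
Proof.
pose a s := (-1)^+(s + 'C(s,2)) * E k s.
pose g r := gQ (Hh k r).
pose h r := (-1)^+'C(r,2) * sQ (Hh k r).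
have H1 : forall n, conv a g n = (n == 0)%:R.
  move=> n; rewrite -[RHS](delta_g n) -(Rdef k n) liftQsum // /conv.
  apply: eq_bigr => i _.
  by rewrite liftQS // liftQM // gQ_E /a /g exprD -!mulrA.
have H2 : forall n, \sum_(i < n.+1) h (n - i)%N * a i = (n == 0)%:R.
  move=> n.
  have e : \sum_(i < n.+1) (-1)^+i * ((-1)^+(odd i && odd (n - i)) * (sQ (Hh k (n - i)) * E k i))
           = (n == 0)%:R.
    rewrite -[RHS](delta_s n) -(Rdef k n) liftQsum //; apply: eq_bigr => i _.
    rewrite liftQS // (sQM Hstar (b := odd i) (c := odd (n - i))) ?sQ_E //.
      exact: parQ_cls (par_ee k i).
    exact: parQ_cls (par_hh k (n - i)).
  have e2 : (-1)^+'C(n,2) * (n == 0)%:R = (n == 0)%:R :> Qt k.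
    by case: n {e} => [|n] /=; rewrite ?mulr0 // expr0 mul1r.
  rewrite -e2 -e mulr_sumr; apply: eq_bigr => i _.
  rewrite /h /a -mulrA comm_sign (signs_eq i (n - i)) subnKC //.
  by rewrite -ltnS.
have := inv_unique H1 H2 r.
rewrite /g /h /Hh !liftQE // -clsS => /cls_eq //.
Qed.

End Part1.

Section Part2.
Variable k : fieldType.
Variables psi gam star : term k -> term k.
Hypothesis Apsi : alg_map psi.
Hypothesis Hpsih : forall r, oeq (psi (hh k r)) (Tscale (sgn k r) (ee k r)).
Hypothesis Agam : alg_map gam.
Hypothesis Hgame : forall r, oeq (gam (ee k r)) (Tscale (sgn k 'C(r, 2)) (ee k r)).
Hypothesis Hstar : super_anti_involution star.
Hypothesis Hstare : forall r, oeq (star (ee k r)) (ee k r).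

Let Lgam := proj1 Agam.
Let Rgam := proj1 Lgam.
Let Lpsi := proj1 Apsi.
Let Rpsi := proj1 Lpsi.
Let Lstar := proj1 Hstar.
Let Rstar := proj1 Lstar.
Local Notation gQ := (liftQ gam).
Local Notation sQ := (liftQ star).
Local Notation pQ := (liftQ psi).

Lemma gQ_Hh r : gQ (Hh k r) = (-1)^+'C(r,2) * sQ (Hh k r).
Proof. by rewrite /Hh !liftQE // -clsS; apply/cls_eq; apply: part1. Qed.

Lemma pQ_Hh r : pQ (Hh k r) = (-1)^+r * E k r.
Proof. by rewrite /Hh !liftQE // -clsS; apply/cls_eq. Qed.

Lemma map_par (f : term k -> term k) : alg_map f ->
  (forall n, parQ (liftQ f (Hh k n.+1)) (odd n.+1)) ->
  forall x b, par x b -> parQ (liftQ f (cls x)) b.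
Proof.
move=> Af HG x b p; elim: p => {x b}.
- move=> b; rewrite (cls0 k) liftQ0; last exact: (proj1 Af).
  exists (T0 k); split; [exact: esym (cls0 k) | exact: par0].
- rewrite (cls1 k) liftQ1 //; exists (T1 k); split; [exact: esym (cls1 k) | exact: par1].
- move=> n; exact: HG n.
- move=> x y b _ [x' [ex px]] _ [y' [ey py]].
  rewrite clsD (liftQD (proj1 Af)) ex ey -clsD; apply: parQ_cls; exact: parD.
- move=> a x b _ [x' [ex px]].
  rewrite -qscaleE (liftQZ (proj1 Af)) ex qscaleE; apply: parQ_cls; exact: parZ.
- move=> x y b c _ [x' [ex px]] _ [y' [ey py]].
  rewrite clsM liftQM // ex ey -clsM; apply: parQ_cls; exact: parM.
- move=> x y b _ IH /cls_eq <-; exact: IH.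
Qed.

Lemma parQ_gam x b : par x b -> parQ (gQ (cls x)) b.
Proof.
apply: map_par => // n; rewrite gQ_Hh.
have [y [-> py]] := parQ_star Hstar (parQ_cls (par_hh k n.+1)).
rewrite -clsS; apply: parQ_cls; exact: parZ.
Qed.

Lemma parQ_psi x b : par x b -> parQ (pQ (cls x)) b.
Proof.
apply: map_par => // n; rewrite pQ_Hh /E -clsS; apply: parQ_cls; apply: parZ.
exact: par_ee.
Qed.

Lemma parQ_map (f : term k -> term k) q b : respects f ->
  (forall x b, par x b -> parQ (liftQ f (cls x)) b) -> parQ q b -> parQ (liftQ f q) b.
Proof. by move=> Rf Hf [x [-> px]]; apply: Hf. Qed.

Lemma commute_hom x b : par x b -> sQ (gQ (pQ (cls x))) = pQ (sQ (gQ (cls x))).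
Proof.
elim => {x b}.
- move=> b; rewrite (cls0 k) (liftQ0 Lpsi) (liftQ0 Lgam) (liftQ0 Lstar) (liftQ0 Lpsi) //.
- rewrite (cls1 k) (liftQ1 Apsi) (liftQ1 Agam) (sQ1 Hstar) (liftQ1 Apsi) //.
- move=> n; rewrite -[cls (G k n)]/(Hh k n.+1) pQ_Hh liftQS // gQ_E // liftQS //.
  rewrite (liftQS Lstar) sQ_E // mulrA -exprD gQ_Hh (liftQS Lstar) (sQK Hstar).
  by rewrite (liftQS Lpsi) pQ_Hh mulrA -exprD addnC.
- move=> x y b _ IHx _ IHy; by rewrite clsD !liftQD // IHx IHy.
- move=> a x b _ IH; by rewrite -qscaleE !liftQZ // IH.
- move=> x y b c px IHx py IHy.
  rewrite clsM (liftQM Apsi) (liftQM Agam).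
  rewrite (sQM Hstar (b := b) (c := c)); last 2 first.
  + apply: (parQ_map Rgam parQ_gam); exact: parQ_psi.
  + apply: (parQ_map Rgam parQ_gam); exact: parQ_psi.
  rewrite (liftQM Agam) (sQM Hstar (b := b) (c := c)); last 2 first.
  + exact: parQ_gam.
  + exact: parQ_gam.
  by rewrite (liftQS Lpsi) (liftQM Apsi) IHx IHy.
- move=> x y b _ IH /cls_eq <-; exact: IH.
Qed.

Lemma decomp (x : term k) : exists x0 x1, par x0 false /\ par x1 true /\ cls x = cls x0 + cls x1.
Proof.
elim: x.
- exists (T0 k), (T0 k); do !split; try exact: par0; by rewrite (cls0 k) addr0.
- exists (T1 k), (T0 k); do !split; [exact: par1 | exact: par0 | by rewrite (cls0 k) addr0].
- move=> n; case h: (odd n.+1).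
    exists (T0 k), (G k n); do !split; [exact: par0 | rewrite -h; exact: parG | by rewrite (cls0 k) add0r].
  exists (G k n), (T0 k); do !split; [rewrite -h; exact: parG | exact: par0 | by rewrite (cls0 k) addr0].
- move=> x [x0 [x1 [p0 [p1 ex]]]] y [y0 [y1 [q0 [q1 ey]]]].
  exists (Tadd x0 y0), (Tadd x1 y1); do !split; try exact: parD.
  by rewrite !clsD ex ey addrACA.
- move=> x [x0 [x1 [p0 [p1 ex]]]] y [y0 [y1 [q0 [q1 ey]]]].
  exists (Tadd (Tmul x0 y0) (Tmul x1 y1)), (Tadd (Tmul x0 y1) (Tmul x1 y0)); do !split.
  + apply: parD; [exact: (parM p0 q0) | exact: (parM p1 q1)].
  + apply: parD; [exact: (parM p0 q1) | exact: (parM p1 q0)].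
  rewrite !clsD !clsM ex ey mulrDl !mulrDr -!addrA; congr (_ + _).
  by rewrite addrA [RHS]addrC.
- move=> a x [x0 [x1 [p0 [p1 ex]]]].
  exists (Tscale a x0), (Tscale a x1); do !split; try exact: parZ.
  rewrite -clsD -(qscaleE a x) ex -clsD qscaleE; apply/cls_eq; exact: oeq_scaleDr.
Qed.

Lemma part2 (x : term k) : oeq (star (gam (psi x))) (psi (star (gam x))).
Proof.
have [x0 [x1 [p0 [p1 ex]]]] := decomp x.
have e : sQ (gQ (pQ (cls x))) = pQ (sQ (gQ (cls x))).
  by rewrite ex !liftQD // (commute_hom p0) (commute_hom p1).
by move: e; rewrite !liftQE // => /cls_eq.
Qed.
End Part2.

End Helpers.
Import Helpers.

Theorem mainTheorem7 (k : fieldType) (char2 : (2%:R : k) != 0)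
  (psi gam star : term k -> term k) :
  alg_automorphism psi ->
  (forall r, oeq (psi (hh k r)) (Tscale (sgn k r) (ee k r))) ->
  alg_involution gam ->
  (forall r, oeq (gam (ee k r)) (Tscale (sgn k 'C(r, 2)) (ee k r))) ->
  super_anti_involution star ->
  (forall r, oeq (star (ee k r)) (ee k r)) ->
  (forall r,
     oeq (gam (hh k r)) (Tscale (sgn k 'C(r, 2)) (star (hh k r))) /\
     oeq (gam (ee k r)) (Tscale (sgn k 'C(r, 2)) (star (ee k r)))) /\
  (forall x, oeq (star (gam (psi x))) (psi (star (gam x)))).
Proof.
move=> [Apsi _] Hpsih [Agam _] Hgame Hstar Hstare.
split.
  move=> r; split; first exact: (part1 Agam Hgame Hstar Hstare).
  apply: oeq_trans (Hgame r) _; apply: oeq_scale; exact: oeq_sym (Hstare r).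
move=> x; exact: (part2 Apsi Hpsih Agam Hgame Hstar Hstare).
Qed.
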